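(* Let $\theta,\theta'$ be real antisymmetric $n\times n$ matrices and $l\ge 1$. The map $\Sigma$, defined on elementary tensors $\Phi=a\otimes\phi_1\otimes\cdots\otimes\phi_l\in \mathrm{B}^l$ by $$\Sigma(\Phi)(a_1,\ldots,a_l)=a\cdot\sigma(\phi_1)(a_1)\cdots\sigma(\phi_l)(a_l)$$ (ordinary commutative product of polynomials, the result regarded as an element of $A_{\theta'}$), extended by linearity and then to the completion $\mathbf{B}^l$, is an isomorphism of complexes $\Sigma:\mathbf{B}^l\to C^l$, i.e. it is a linear bijection satisfying $d_l\Sigma=\Sigma\partial_l$.
   Context: For a real antisymmetric $n\times n$ matrix $\theta$, $A_\theta$ is the unital dg-algebra over $\mathbb{R}$ generated by $x^1,\dots,x^n$ (degree $0$) and $\xi^1,\dots,\xi^n$ (degree $1$) with relations $x^ix^j-x^jx^i=\theta^{ij}$, $x^i\xi^j=\xi^jx^i$, $\xi^i\xi^j=0$, and differential $dx^i=\xi^i$, $d\xi^i=0$. As a vector space (for every $\theta$) $A_\theta$ is identified with the space of polynomials $a=a_0(x)+a_i(x)\xi^i$ in commuting $x$'s that are at most linear in the $\xi$'s (summation over repeated indices). $A_\theta[1]$ denotes the degree shift ($A_\theta[1]_k=(A_\theta)_{k+1}$), and $B^l(A_\theta)=A_\theta[1]^{\otimes l}$ with the differential induced by $d$ (with Koszul signs). $C^l=\mathrm{Hom}(B^l(A_\theta),A_{\theta'}[1])$ is the graded space of all linear maps, with differential $d_l(f)=f\circ d$. Let $\mathrm{B}$ be the graded space of expressions $\phi=\phi^0(p)+\phi^i(p)\zeta_i$,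 where $\phi^0,\phi^i$ are formal power series in commuting variables $p_1,\dots,p_n$ of degree $0$ and $\zeta_i$ have degree $-1$; its differential is $\partial\phi=p_i\phi^i(p)$. Put $\mathrm{B}^l=A_\theta\otimes\mathrm{B}^{\otimes l}$, with $A_\theta$ regarded as a complex with zero differential, the degree of $a\otimes\phi_1\otimes\cdots\otimes\phi_l$ being $\deg\phi_1+\cdots+\deg\phi_l+\deg a+l-1$, and with $\partial_l$ the tensor-product differential. $\mathbf{B}^l$ is the completion of $\mathrm{B}^l$ with respect to the descending filtration by powers of the $p$'s. For $\phi\in\mathrm{B}$, $\sigma(\phi):A_\theta\to (A_\theta)_0$ sends $a=a_0(x)+a_j(x)\xi^j$ to $\phi^0(\partial_1,\dots,\partial_n)a_0(x)+\phi^j(\partial_1,\dots,\partial_n)a_j(x)$, where $\partial_i=\partial/\partial x^i$. *)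

(* Defs.v *)
From HB Require Import structures.
From mathcomp Require Import all_boot all_order all_algebra.
From Stdlib Require Rdefinitions.
From mathcomp Require Import Rstruct.
From mathcomp.multinomials Require Export mpoly.
Export Order.TTheory GRing.Theory.

Set Implicit Arguments.
Unset Strict Implicit.
Unset Printing Implicit Defensive.

Notation R := Rdefinitions.R.

Local Open Scope ring_scope.

Section Defs.
Variables (n l : nat).

Definition P := {mpoly R[n]}.

(* The underlying vector space of A_theta (the same for every theta):
   a = a_0(x) + a_i(x) xi^i  is encoded as the finite function
   a None = a_0,  a (Some i) = a_i  (coefficient of xi^i). *)
Definition A := {ffun option 'I_n -> P}.

Definition dA (a : A) : A :=
  [ffun o => if o is Some i then mderiv i (a None) else 0].

(* Koszul parity twist on A_theta[1]: a_0 has degree -1 (odd) in A[1],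
   a_i xi^i has degree 0 (even). *)
Definition twistA (a : A) : A :=
  [ffun o => if o is None then - a None else a o].

Definition mulAP (a : A) (q : P) : A := [ffun o => a o * q].

(* An element phi = phi^0(p) + phi^i(p) zeta_i of B: formal power series in
   p_1..p_n, encoded by coefficients: phi None beta = coefficient of p^beta in
   phi^0, phi (Some i) beta = coefficient of p^beta in phi^i. *)
Definition Bel := option 'I_n -> 'X_{1..n} -> R.

(* sigma(phi)(a) = phi^0(d) a_0 + phi^i(d) a_i ; the sum over beta is finite
   since d^beta a = 0 as soon as |beta| >= msize a (= 1 + total degree). *)
Definition sigma (phi : Bel) (a : A) : P :=
  \sum_(o : option 'I_n) \sum_(b : 'X_{1..n < msize (a o)})
     phi o b *: mderivm b (a o).

(* The completion bold-B^l of B^l = A_theta (x) B^{(x) l} w.r.t. the p-adic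
   filtration: B^{(x) l} has the basis-type decomposition given by a pattern
   s : 'I_l -> option 'I_n (factor j is the phi^0-part if s j = None, the
   zeta_i-part if s j = Some i) and a monomial p^(alpha j) in each factor;
   the completion is then the space of ALL families of coefficients in A,
   Phi = sum_(s, alpha) c s alpha (x) (p^(alpha 1) zeta_(s 1)) (x) ... *)
Definition Pat := {ffun 'I_l -> option 'I_n}.
Definition Mon := {ffun 'I_l -> 'X_{1..n}}.
Definition Bhat := Pat -> Mon -> A.

Definition elemB (a : A) (phis : 'I_l -> Bel) : Bhat :=
  fun s al => (\prod_(j < l) phis j (s j) (al j)) *: a.

Definition updP (s : Pat) (j : 'I_l) (o : option 'I_n) : Pat :=
  [ffun k => if k == j then o else s k].
Definition updM (al : Mon) (j : 'I_l) (m : 'X_{1..n}) : Mon :=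
  [ffun k => if k == j then m else al k].

(* Koszul sign for passing the differential through phi_1 .. phi_(j-1),
   each phi_k counted with degree deg phi_k + 1 (as in the degree formula
   deg phi_1 + ... + deg phi_l + deg a + l - 1): a phi^0-factor is odd, a
   zeta-factor is even. *)
Definition ksign (s : Pat) (j : 'I_l) : R :=
  \prod_(k < l | (k < j)%N) (if s k is None then -1 else 1).

(* The tensor-product differential partial_l (d phi = p_i phi^i, A has zero
   differential), written in coordinates on the completion. *)
Definition partial_l (c : Bhat) : Bhat :=
  fun s al =>
    \sum_(j < l | s j == None) \sum_(i < n)
       (if (U_(i) <= al j)%MM
        then ksign s j *: c (updP s j (Some i)) (updM al j (al j - U_(i))%MM)
        else 0).

(* C^l = Hom(A_theta[1]^{(x) l}, A_theta'[1]) realised as multilinear maps *)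
Definition Cl := {ffun 'I_l -> A} -> A.

Definition updA (xs : {ffun 'I_l -> A}) (j : 'I_l) (x : A) : {ffun 'I_l -> A} :=
  [ffun k => if k == j then x else xs k].

Definition multilinear (f : Cl) : Prop :=
  forall (xs : {ffun 'I_l -> A}) (j : 'I_l) (k : R) (x y : A),
    f (updA xs j (k *: x + y)) = k *: f (updA xs j x) + f (updA xs j y).

(* the differential of B^l(A_theta) (with Koszul signs) and d_l f = f o d *)
Definition d_l (f : Cl) : Cl :=
  fun xs => \sum_(j < l)
    f [ffun k : 'I_l => if (k < j)%N then twistA (xs k)
                 else if k == j then dA (xs k) else xs k].

(* Sigma on the completion: the (unique continuous) extension of
   a (x) phi_1 (x) ... (x) phi_l |-> (a_1..a_l |-> a sigma(phi_1)(a_1)...),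
   which for fixed arguments is a finite sum since d^alpha of a polynomial
   vanishes for |alpha| >= its msize. *)
Definition bound (xs : {ffun 'I_l -> A}) : nat :=
  (\max_(j < l) \max_(o : option 'I_n) msize (xs j o))%N.

Definition Sigma (c : Bhat) : Cl :=
  fun xs =>
    \sum_(s : Pat) \sum_(al : {ffun 'I_l -> 'X_{1..n < bound xs}})
      mulAP (c s [ffun j => bmnm (al j)])
            (\prod_(j < l) mderivm (bmnm (al j)) (xs j (s j))).

End Defs.

(* Main.v *)
Set Warnings "-notation-overridden -ambiguous-paths -notation-incompatible-prefix".
Require Import Defs.
From HB Require Import structures.
From mathcomp Require Import all_boot all_order all_algebra.
From mathcomp Require Import Rstruct.
From mathcomp.multinomials Require Import mpoly.
From mathcomp Require Import zify.
Local Open Scope ring_scope.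
Import GRing.Theory.
Set Implicit Arguments. Unset Strict Implicit. Unset Printing Implicit Defensive.
Lemma big_seq_eq (V : nmodType) (T : eqType) (s1 s2 : seq T) (F : T -> V) :
  uniq s1 -> uniq s2 ->
  (forall x, x \in s1 -> x \notin s2 -> F x = 0) ->
  (forall x, x \in s2 -> x \notin s1 -> F x = 0) ->
  \sum_(x <- s1) F x = \sum_(x <- s2) F x.
Proof.
move=> u1 u2 h1 h2.
rewrite (bigID (fun x => x \in s2)) /= [X in _ + X]big1_seq ?addr0; last first.
  by move=> x /andP[xn xs]; apply: h1.
rewrite [RHS](bigID (fun x => x \in s1)) /= [X in _ + X]big1_seq ?addr0; last first.
  by move=> x /andP[xn xs]; apply: h2.
rewrite -[LHS]big_filter -[RHS]big_filter; apply: perm_big; apply: uniq_perm; rewrite ?filter_uniq //.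
by move=> x; rewrite !mem_filter andbC.
Qed.

Lemma mdeg_le n (m m' : 'X_{1..n}) : (m <= m')%MM -> (mdeg m <= mdeg m')%N.
Proof. by move=> le; rewrite -(submK le) mdegD leq_addl. Qed.

Lemma mderivm_small n (m : 'X_{1..n}) (p : {mpoly R[n]}) :
  (msize p <= mdeg m)%N -> mderivm m p = 0.
Proof.
move=> h; rewrite mderivmE big1_seq // => m' /andP[_ hm'].
have lt := msize_mdeg_lt hm'.
have nle : ~~ (m <= m')%MM.
  apply/negP => le; have := mdeg_le le; rewrite leqNgt.
  by rewrite (leq_trans lt h).
have [i hi] : exists i, (m' i < m i)%N.
  apply/existsP; rewrite -[X in is_true X]negbK negb_exists; apply/negP => /forallP H.
  by move/negP: nle; apply; apply/mnm_lepP => i; rewrite leqNgt; apply: H.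
by rewrite (bigD1 i) //= ffact_small // mul0n mulr0 scale0r.
Qed.

Definition mk n l N (al : {ffun 'I_l -> 'X_{1..n < N}}) : Mon n l :=
  [ffun j => bmnm (al j)].
Definition inb n l N (m : Mon n l) : bool := [forall j, (mdeg (m j) < N)%N].

Lemma mk_inj n l N : injective (@mk n l N).
Proof.
move=> a b /ffunP H; apply/ffunP => j; have := H j; rewrite !ffunE => e.
by apply: val_inj.
Qed.

Lemma mem_mk n l N (m : Mon n l) :
  (m \in map (@mk n l N) (index_enum {ffun 'I_l -> 'X_{1..n < N}})) = inb N m.
Proof.
apply/mapP/forallP.
  by move=> [al _ ->] j; rewrite ffunE; exact: bmdeg.
move=> H; exists [ffun j => BMultinom (H j)]; first by rewrite mem_index_enum.
by apply/ffunP => j; rewrite !ffunE.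
Qed.

Lemma sumFB (V : nmodType) n l K N (G : Mon n l -> V) : (K <= N)%N ->
  (forall m, ~~ inb K m -> G m = 0) ->
  \sum_(al : {ffun 'I_l -> 'X_{1..n < N}}) G (mk al)
  = \sum_(al : {ffun 'I_l -> 'X_{1..n < K}}) G (mk al).
Proof.
move=> KN HG.
rewrite -(big_map (@mk n l N) (fun _ => true) G).
rewrite -(big_map (@mk n l K) (fun _ => true) G).
apply: big_seq_eq.
- by rewrite map_inj_uniq ?index_enum_uniq //; exact: mk_inj.
- by rewrite map_inj_uniq ?index_enum_uniq //; exact: mk_inj.
- by move=> m _; rewrite mem_mk => /HG.
- move=> m; rewrite !mem_mk => /forallP H /negP []; apply/forallP => j.
  exact: leq_trans (H j) KN.
Qed.

Lemma mem_bm n N (m : 'X_{1..n}) :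
  (m \in map val (index_enum 'X_{1..n < N})) = (mdeg m < N)%N.
Proof.
apply/mapP/idP; first by move=> [b _ ->]; exact: bmdeg.
by move=> H; exists (BMultinom H); rewrite ?mem_index_enum.
Qed.

Lemma sumX (V : nmodType) n K N (G : 'X_{1..n} -> V) : (K <= N)%N ->
  (forall m, (K <= mdeg m)%N -> G m = 0) ->
  \sum_(b : 'X_{1..n < N}) G (bmnm b) = \sum_(b : 'X_{1..n < K}) G (bmnm b).
Proof.
move=> KN HG.
rewrite -(big_map val (fun _ => true) G) -(big_map val (fun _ => true) G).
apply: big_seq_eq.
- by rewrite map_inj_uniq ?index_enum_uniq //; exact: val_inj.
- by rewrite map_inj_uniq ?index_enum_uniq //; exact: val_inj.
- by move=> m _; rewrite mem_bm -leqNgt => /HG.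
- by move=> m; rewrite !mem_bm => H /negP []; exact: leq_trans H KN.
Qed.

Lemma mulAP0l n (q : P n) : mulAP 0 q = 0.
Proof. by apply/ffunP => o; rewrite !ffunE mul0r. Qed.
Lemma mulAP0r n (x : A n) : mulAP x 0 = 0.
Proof. by apply/ffunP => o; rewrite !ffunE mulr0. Qed.
Lemma mulAPDl n (x y : A n) q : mulAP (x + y) q = mulAP x q + mulAP y q.
Proof. by apply/ffunP => o; rewrite !ffunE mulrDl. Qed.
Lemma mulAPDr n (x : A n) q r : mulAP x (q + r) = mulAP x q + mulAP x r.
Proof. by apply/ffunP => o; rewrite !ffunE mulrDr. Qed.
Lemma mulAPZl n (x : A n) k q : mulAP (k *: x) q = k *: mulAP x q.
Proof. by apply/ffunP => o; rewrite !ffunE -scalerAl. Qed.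
Lemma mulAPZr n (x : A n) k q : mulAP x (k *: q) = k *: mulAP x q.
Proof. by apply/ffunP => o; rewrite !ffunE scalerAr. Qed.
Lemma mulAPNl n (x : A n) q : mulAP (- x) q = - mulAP x q.
Proof. by apply/ffunP => o; rewrite !ffunE mulNr. Qed.
Lemma mulAP_sumr n (x : A n) I (r : seq I) (Pr : pred I) (F : I -> P n) :
  mulAP x (\sum_(i <- r | Pr i) F i) = \sum_(i <- r | Pr i) mulAP x (F i).
Proof. exact: (big_morph _ (mulAPDr x) (mulAP0r x)). Qed.
Lemma mulAP_suml n (q : P n) I (r : seq I) (Pr : pred I) (F : I -> A n) :
  mulAP (\sum_(i <- r | Pr i) F i) q = \sum_(i <- r | Pr i) mulAP (F i) q.
Proof. exact: (big_morph (fun x => mulAP x q) (fun x y => mulAPDl x y q) (mulAP0l q)). Qed.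

Definition term n l (c : Bhat n l) (xs : {ffun 'I_l -> A n}) (s : Pat n l)
  (m : Mon n l) : A n :=
  mulAP (c s m) (\prod_(j < l) mderivm (m j) (xs j (s j))).

Definition SigmaN n l N (c : Bhat n l) xs : A n :=
  \sum_(s : Pat n l) \sum_(al : {ffun 'I_l -> 'X_{1..n < N}}) term c xs s (mk al).

Lemma SigmaE n l (c : Bhat n l) xs : Sigma c xs = SigmaN (bound xs) c xs.
Proof.
apply: eq_bigr => s _; apply: eq_bigr => al _; rewrite /term.
by congr mulAP; apply: eq_bigr => j _; rewrite ffunE.
Qed.

Lemma msize_bound n l (xs : {ffun 'I_l -> A n}) j o : (msize (xs j o) <= bound xs)%N.
Proof.
rewrite /bound; apply: leq_trans (leq_bigmax j).
by rewrite (bigD1 o) //= leq_maxl. 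
Qed.

Lemma term_vanish n l (c : Bhat n l) xs s m : ~~ inb (bound xs) m -> term c xs s m = 0.
Proof.
rewrite negb_forall => /existsP [j]; rewrite -leqNgt => H.
rewrite /term (bigD1 j) //= mderivm_small ?mul0r ?mulAP0r //.
exact: leq_trans (msize_bound _ _ _) H.
Qed.

Lemma SigmaNE n l N (c : Bhat n l) xs : (bound xs <= N)%N -> Sigma c xs = SigmaN N c xs.
Proof.
move=> bN; rewrite SigmaE; apply: eq_bigr => s _.
rewrite (@sumFB _ n l (bound xs) N) //.
by move=> m; apply: term_vanish.
Qed.
Lemma Sigma_lin n l (k : R) (c c' : Bhat n l) xs :
  Sigma (fun s al => k *: c s al + c' s al) xs = k *: Sigma c xs + Sigma c' xs.
Proof.
rewrite !SigmaE /SigmaN scaler_sumr -big_split; apply: eq_bigr => s _.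
rewrite scaler_sumr -big_split; apply: eq_bigr => al _.
by rewrite /term mulAPDl mulAPZl.
Qed.
Lemma prodD1 n l (j : 'I_l) (F : 'I_l -> P n) :
  \prod_(i < l) F i = F j * \prod_(i < l | i != j) F i.
Proof. by rewrite (bigD1 j). Qed.

Lemma term_upd n l (c : Bhat n l) xs j (k : R) (x y : A n) s m :
  term c (updA xs j (k *: x + y)) s m
  = k *: term c (updA xs j x) s m + term c (updA xs j y) s m.
Proof.
rewrite /term !(prodD1 j).
have E v : \prod_(i < l | i != j) mderivm (m i) ((updA xs j v) i (s i))
         = \prod_(i < l | i != j) mderivm (m i) (xs i (s i)).
  by apply: eq_bigr => i /negbTE h; rewrite ffunE h.
rewrite !E !ffunE eqxx !ffunE mderivmD mderivmZ mulrDl -scalerAl.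
by rewrite mulAPDr mulAPZr.
Qed.
Lemma Sigma_ml n l (c : Bhat n l) : multilinear (Sigma c).
Proof.
move=> xs j k x y.
set X1 := updA xs j (k *: x + y); set X2 := updA xs j x; set X3 := updA xs j y.
pose N := (bound X1 + bound X2 + bound X3)%N.
rewrite (@SigmaNE _ _ N c X1) ?(@SigmaNE _ _ N c X2) ?(@SigmaNE _ _ N c X3);
  try by rewrite /N; lia.
rewrite /SigmaN scaler_sumr -big_split; apply: eq_bigr => s _.
rewrite scaler_sumr -big_split; apply: eq_bigr => al _.
exact: term_upd.
Qed.
Lemma Sigma_elem n l (a : A n) (phis : 'I_l -> Bel n) xs :
  Sigma (elemB a phis) xs = mulAP a (\prod_(j < l) sigma (phis j) (xs j)).
Proof.
pose N := bound xs.
have Hs j : sigma (phis j) (xs j) = \sum_(o : option 'I_n) \sum_(b : 'X_{1..n < N})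
        phis j o b *: mderivm b (xs j o).
  apply: eq_bigr => o _; rewrite (@sumX _ n (msize (xs j o)) N
     (fun b => phis j o b *: mderivm b (xs j o))) ?msize_bound //.
  by move=> m hm; rewrite mderivm_small ?scaler0.
rewrite (eq_bigr _ (fun j _ => Hs j)) bigA_distr_bigA /=.
rewrite SigmaE mulAP_sumr; apply: eq_bigr => s _.
rewrite bigA_distr_bigA mulAP_sumr; apply: eq_bigr => al _.
rewrite /term /elemB mulAPZl scaler_prod mulAPZr.
congr (_ *: _); first by apply: eq_bigr => j _; rewrite ffunE.
by congr mulAP; apply: eq_bigr => j _; rewrite ffunE.
Qed.

Definition eb n (o : option 'I_n) (b : 'X_{1..n}) : A n :=
  [ffun o' => if o' == o then 'X_[b] else 0].
Definition bt n l (s : Pat n l) (be : Mon n l) : {ffun 'I_l -> A n} :=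
  [ffun j => eb (s j) (be j)].
Definition Qm n l (be m : Mon n l) : P n := \prod_(j < l) mderivm (m j) 'X_[be j].
Definition tdeg n l (m : Mon n l) : nat := (\sum_(j < l) mdeg (m j))%N.
Definition wf n l (be : Mon n l) : nat := (\prod_(j < l) \prod_(i < n) (be j i)`!)%N.

Lemma mderivm0 n (m : 'X_{1..n}) : mderivm m (0 : P n) = 0.
Proof. by apply: mderivm_small; rewrite msize0. Qed.

Lemma SigmaK n l (c : Bhat n l) s be : Sigma c (bt s be) =
  \sum_(al : {ffun 'I_l -> 'X_{1..n < bound (bt s be)}}) mulAP (c s (mk al)) (Qm be (mk al)).
Proof.
rewrite SigmaE /SigmaN (bigD1 s) //= [X in _ + X]big1 ?addr0.
  apply: eq_bigr => al _; rewrite /term; congr mulAP; apply: eq_bigr => j _.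
  by rewrite !ffunE eqxx.
move=> s' hs'.
have [j hj] : exists j, s' j != s j.
  apply/existsP; rewrite -[X in is_true X]negbK negb_exists; apply/negP => /forallP H.
  by move/negP: hs'; apply; apply/eqP/ffunP => j; apply/eqP; have := H j; rewrite negbK.
apply: big1 => al _; rewrite /term (prodD1 j) !ffunE (negbTE hj).
by rewrite mderivm0 mul0r mulAP0r.
Qed.

Lemma submm' n (m : 'X_{1..n}) : (m - m)%MM = 0%MM.
Proof. by apply/mnmP => i; rewrite mnmBE mnm0E subnn. Qed.

Lemma QmX n l (be : Mon n l) : Qm be be = (wf be)%:R *: 1.
Proof.
rewrite /Qm (eq_bigr (fun j => ((\prod_(i < n) (be j i)`!)%N)%:R *: (1 : P n))).
  by rewrite scaler_prod big1_eq /wf natr_prod.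
move=> j _; rewrite mderivmX submm' mpolyX0; congr (_%:R *: _).
by apply: eq_bigr => i _; rewrite ffactnn.
Qed.

Lemma mderivmX0 n (m b : 'X_{1..n}) : ~~ (m <= b)%MM -> mderivm m 'X_[b] = (0 : P n).
Proof.
move=> nle.
have [i hi] : exists i, (b i < m i)%N.
  apply/existsP; rewrite -[X in is_true X]negbK negb_exists; apply/negP => /forallP H.
  by move/negP: nle; apply; apply/mnm_lepP => i; rewrite leqNgt; apply: H.
by rewrite mderivmX (bigD1 i) //= ffact_small // mul0n scale0r.
Qed.

Lemma Qm_nz n l (be m : Mon n l) : Qm be m != 0 -> m != be -> (tdeg m < tdeg be)%N.
Proof.
move=> hq hne.
have hle : forall j, (m j <= be j)%MM.
  move=> j; apply/negP => /negP nle; move/negP: hq; apply.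
  by rewrite /Qm (prodD1 j) mderivmX0 // mul0r.
have [j hj] : exists j, m j != be j.
  apply/existsP; rewrite -[X in is_true X]negbK negb_exists; apply/negP => /forallP H.
  by move/negP: hne; apply; apply/eqP/ffunP => j; apply/eqP; have := H j; rewrite negbK.
have ltj : (mdeg (m j) < mdeg (be j))%N.
  rewrite -(submK (hle j)) mdegD -[X in (X < _)%N]add0n ltn_add2r lt0n mdeg_eq0.
  apply/negP => /eqP e; move/negP: hj; apply; apply/eqP.
  by rewrite -(submK (hle j)) e add0m.
rewrite /tdeg (bigD1 j) //= [X in (_ < X)%N](bigD1 j) //= -addSn leq_add //.
by apply: leq_sum => i _; apply: mdeg_le.
Qed.

Lemma wf_neq0 n l (be : Mon n l) : ((wf be)%:R : R) != 0.
Proof.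
rewrite Num.Theory.pnatr_eq0 -lt0n /wf prodn_gt0 // => j.
by rewrite prodn_gt0 // => i; rewrite fact_gt0.
Qed.

Lemma be_bound n l (s : Pat n l) (be : Mon n l) j : (mdeg (be j) < bound (bt s be))%N.
Proof.
have := msize_bound (bt s be) j (s j); rewrite !ffunE eqxx msizeX. done.
Qed.

Lemma SigmaK2 n l (c : Bhat n l) s be : Sigma c (bt s be) =
  (wf be)%:R *: c s be +
  \sum_(al : {ffun 'I_l -> 'X_{1..n < bound (bt s be)}} | mk al != be)
     mulAP (c s (mk al)) (Qm be (mk al)).
Proof.
pose alb : {ffun 'I_l -> 'X_{1..n < bound (bt s be)}} :=
  [ffun j => BMultinom (be_bound s be j)].
have ealb : mk alb = be by apply/ffunP => j; rewrite !ffunE.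
rewrite SigmaK (bigD1 alb) //= ealb QmX mulAPZr.
have -> : mulAP (c s be) 1 = c s be by apply/ffunP => o; rewrite ffunE mulr1.
congr (_ + _); apply: eq_bigl => al.
by rewrite -(inj_eq (@mk_inj n l _)) ealb.
Qed.

Lemma Sigma_inj n l (c c' : Bhat n l) : (forall xs, Sigma c xs = Sigma c' xs) ->
  forall s al, c s al = c' s al.
Proof.
move=> H s.
pose D := fun s al => (-1) *: c' s al + c s al.
have HD xs : Sigma D xs = 0 by rewrite Sigma_lin H scaleN1r addNr.
suff h : forall be, D s be = 0.
  by move=> al; move/eqP: (h al); rewrite /D scaleN1r addrC subr_eq0 => /eqP.
move=> be; move: (ltnSn (tdeg be)); move: {-2}be; elim: (tdeg be).+1 => // k IH b hb.
have := HD (bt s b); rewrite SigmaK2 big1 ?addr0; last first.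
  move=> al hal; case: (eqVneq (Qm b (mk al)) 0) => [->|hq]; first by rewrite mulAP0r.
  by rewrite IH ?mulAP0l //; apply: leq_trans (Qm_nz hq hal) _.
by move/eqP; rewrite scaler_eq0 (negbTE (wf_neq0 b)) /= => /eqP.
Qed.

Fixpoint cr n l (f : Cl n l) (k : nat) : Bhat n l :=
  match k with
  | 0 => fun _ _ => 0
  | k'.+1 => fun s be =>
     if (tdeg be < k')%N then cr f k' s be
     else ((wf be)%:R)^-1 *: (f (bt s be) -
       \sum_(al : {ffun 'I_l -> 'X_{1..n < bound (bt s be)}} | mk al != be)
          mulAP (cr f k' s (mk al)) (Qm be (mk al)))
  end.

Definition csol n l (f : Cl n l) : Bhat n l := fun s be => cr f (tdeg be).+1 s be.

Lemma cr_stable n l (f : Cl n l) k s be : (tdeg be < k)%N -> cr f k s be = csol f s be.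
Proof.
elim: k => // k IH h.
case: (ltnP (tdeg be) k) => lt; first by rewrite /= lt IH.
have e : (tdeg be).+1 = k.+1 by apply/eqP; rewrite eqn_leq h ltnS lt.
by rewrite /csol e.
Qed.

Lemma csol_eq n l (f : Cl n l) s be : csol f s be =
  ((wf be)%:R)^-1 *: (f (bt s be) -
     \sum_(al : {ffun 'I_l -> 'X_{1..n < bound (bt s be)}} | mk al != be)
        mulAP (csol f s (mk al)) (Qm be (mk al))).
Proof.
rewrite {1}/csol /= ltnn; congr (_ *: (_ - _)); apply: eq_bigr => al hal.
case: (eqVneq (Qm be (mk al)) 0) => [->|hq]; first by rewrite !mulAP0r.
by rewrite cr_stable //; exact: Qm_nz.
Qed.

Lemma csol_bt n l (f : Cl n l) s be : Sigma (csol f) (bt s be) = f (bt s be).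
Proof.
rewrite SigmaK2 {1}csol_eq scalerA mulfV ?wf_neq0 // scale1r subrK //.
Qed.

Lemma ml_upd0 n l (D : Cl n l) xs j : multilinear D -> D (updA xs j 0) = 0.
Proof.
move=> H; have := H xs j 1 0 0; rewrite scaler0 addr0 scale1r.
by move/(congr1 (fun z => z - D (updA xs j 0))); rewrite addrK subrr => /esym.
Qed.

Lemma ml_add n l (D : Cl n l) xs j x y : multilinear D ->
  D (updA xs j (x + y)) = D (updA xs j x) + D (updA xs j y).
Proof. by move=> H; have := H xs j 1 x y; rewrite !scale1r. Qed.

Lemma ml_scale n l (D : Cl n l) xs j k x : multilinear D ->
  D (updA xs j (k *: x)) = k *: D (updA xs j x).
Proof. by move=> H; have := H xs j k x 0; rewrite !addr0 ml_upd0 // addr0. Qed.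

Lemma ml_sum n l (D : Cl n l) xs j I (r : seq I) (Pr : pred I) (F : I -> A n) :
  multilinear D ->
  D (updA xs j (\sum_(i <- r | Pr i) F i)) = \sum_(i <- r | Pr i) D (updA xs j (F i)).
Proof.
move=> H.
exact: (big_morph (fun v => D (updA xs j v)) (fun x y => ml_add xs j x y H) (ml_upd0 xs j H)).
Qed.

Lemma decompA n (x : A n) :
  x = \sum_(o : option 'I_n) \sum_(b <- msupp (x o)) (x o)@_b *: eb o b.
Proof.
apply/ffunP => o'; rewrite sum_ffunE (bigD1 o') //= [X in _ + X]big1 ?addr0.
  rewrite sum_ffunE {1}[x o']mpolyE; apply: eq_bigr => b _.
  by rewrite !ffunE eqxx.
move=> o ho; rewrite sum_ffunE big1 // => b _.
by rewrite !ffunE eq_sym (negbTE ho) scaler0.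
Qed.

Lemma updA_id n l (xs : {ffun 'I_l -> A n}) j : updA xs j (xs j) = xs.
Proof. by apply/ffunP => k; rewrite ffunE; case: eqP => // ->. Qed.

Lemma ml_zero n l (D : Cl n l) : multilinear D ->
  (forall s be, D (bt s be) = 0) -> forall xs, D xs = 0.
Proof.
move=> H H0.
suff h : forall k (xs : {ffun 'I_l -> A n}), (forall j : 'I_l, (k <= j)%N -> exists o b, xs j = eb o b) ->
    D xs = 0.
  by move=> xs; apply: (h l) => j; rewrite leqNgt ltn_ord.
elim=> [|k IH] xs hx.
  have hx' : forall j, exists p : option 'I_n * 'X_{1..n}, xs j = eb p.1 p.2.
    by move=> j; have [o [b e]] := hx j (leq0n j); exists (o, b).
  have [g hg] := fin_all_exists hx'.
  have -> : xs = bt [ffun j => (g j).1] [ffun j => (g j).2].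
    by apply/ffunP => j; rewrite !ffunE hg.
  exact: H0.
case: (ltnP k l) => kl.
  pose kk := Ordinal kl.
  have -> : xs = updA xs kk (xs kk) by rewrite updA_id.
  rewrite (decompA (xs kk)) ml_sum //; apply: big1 => o _.
  rewrite ml_sum //; apply: big1 => b _.
  rewrite ml_scale // IH ?scaler0 // => j hj.
  rewrite ffunE; case: eqP => [_|/eqP ne]; first by exists o, b.
  apply: hx; rewrite ltn_neqAle hj andbT; apply/negP => /eqP e; move/negP: ne; apply.
  by apply/eqP/val_inj; rewrite /= e.
apply: IH => j hj; have := ltn_ord j; rewrite ltnNge (leq_trans kl hj) //.
Qed.

Lemma Sigma_surj n l (f : Cl n l) : multilinear f ->
  exists c : Bhat n l, forall xs, Sigma c xs = f xs.
Proof.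
move=> Hf; exists (csol f) => xs; apply/eqP; rewrite -subr_eq0; apply/eqP.
pose D : Cl n l := fun xs => Sigma (csol f) xs - f xs.
have HD : multilinear D.
  move=> ys j k x y; rewrite /D Sigma_ml Hf scalerBr.
  by rewrite addrACA opprD addrA.
by apply: (ml_zero HD) => s be; rewrite /D csol_bt subrr.
Qed.

Definition sgn n l (s : Pat n l) (k : 'I_l) : R := if s k is None then -1 else 1.

Lemma ksign_ne n l (s : Pat n l) j :
  \prod_(k < l | k != j) (if (k < j)%N then sgn s k else 1) = ksign s j.
Proof.
rewrite /ksign [RHS]big_mkcond [LHS]big_mkcond; apply: eq_bigr => k _.
by case: (eqVneq k j) => [->|ne]; rewrite ?eqxx ?ltnn ?ne.
Qed.

Definition LT n l (c : Bhat n l) (xs : {ffun 'I_l -> A n}) j (i : 'I_n) s (m : Mon n l)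
  : A n :=
  mulAP (c s m) (mderivm (m j) (mderiv i (xs j None)) *
                 \prod_(k < l | k != j) mderivm (m k) (xs k (s k))).

Definition ys n l (xs : {ffun 'I_l -> A n}) (j : 'I_l) : {ffun 'I_l -> A n} :=
  [ffun k : 'I_l => if (k < j)%N then twistA (xs k)
                    else if k == j then dA (xs k) else xs k].

Lemma term_ys n l (c : Bhat n l) xs j s m :
  term c (ys xs j) s m =
  \sum_(i < n) (if s j == Some i then ksign s j *: LT c xs j i s m else 0).
Proof.
rewrite /term /ys (prodD1 j) ffunE ltnn eqxx /dA ffunE.
case e: (s j) => [i0|]; last first.
  by rewrite mderivm0 mul0r mulAP0r big1.
rewrite (bigD1 i0) //= eqxx [X in _ + X]big1 ?addr0; last first.
  by move=> i hi; case: (eqVneq (Some i0) (Some i)) => [[e']|//]; rewrite e' eqxx in hi.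
rewrite (eq_bigr (fun k : 'I_l => (if (k < j)%N then sgn s k else 1) *:
                           mderivm (m k) (xs k (s k)))); last first.
  move=> k hk; rewrite ffunE; case: ifP => hkj; last by rewrite (negbTE hk) scale1r.
  rewrite /twistA ffunE /sgn; case: (s k) => [o|]; first by rewrite scale1r.
  by rewrite mderivmN scaleN1r.
by rewrite scaler_prod ksign_ne -scalerAr mulAPZr /LT.
Qed.

Definition RT n l (c : Bhat n l) (xs : {ffun 'I_l -> A n}) j (i : 'I_n) s (m : Mon n l)
  : A n :=
  mulAP (c (updP s j (Some i)) (updM m j (m j - U_(i))%MM))
        (\prod_(k < l) mderivm (m k) (xs k (s k))).

Lemma term_partial n l (c : Bhat n l) xs s m :
  term (partial_l c) xs s m = \sum_(j < l) \sum_(i < n)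
    (if (s j == None) && (U_(i) <= m j)%MM then ksign s j *: RT c xs j i s m else 0).
Proof.
rewrite /term /partial_l mulAP_suml big_mkcond; apply: eq_bigr => j _.
case: (s j == None) => /=; last by rewrite big1.
rewrite mulAP_suml; apply: eq_bigr => i _.
by case: ifP => _; rewrite ?mulAPZl ?mulAP0l.
Qed.

Lemma RT_LT n l (c : Bhat n l) (xs : {ffun 'I_l -> A n}) (j : 'I_l) (i : 'I_n) (s : Pat n l) (m : Mon n l) : s j = None -> (U_(i) <= m j)%MM ->
  ksign s j *: RT c xs j i s m =
  ksign (updP s j (Some i)) j *: LT c xs j i (updP s j (Some i)) (updM m j (m j - U_(i))%MM).
Proof.
move=> hs hu; congr (_ *: _).
  apply: eq_bigr => k hk; rewrite ffunE.
  have -> : (k == j) = false by apply/negbTE; apply: contraTneq hk => ->; rewrite ltnn.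
  done.
rewrite /RT /LT; congr mulAP; rewrite (prodD1 j) hs; congr (_ * _).
  by rewrite ffunE eqxx -mderivmU1m -mderivmDm addmC submK.
by apply: eq_bigr => k hk; rewrite !ffunE (negbTE hk).
Qed.

Definition EN n l N : seq (Pat n l * Mon n l) :=
  [seq (s, mk al) | s <- index_enum (Pat n l),
                    al <- index_enum {ffun 'I_l -> 'X_{1..n < N}}].

Lemma sum_EN (V : nmodType) n l N (H : Pat n l * Mon n l -> V) :
  \sum_(s : Pat n l) \sum_(al : {ffun 'I_l -> 'X_{1..n < N}}) H (s, mk al)
  = \sum_(p <- EN n l N) H p.
Proof. by rewrite big_allpairs_dep. Qed.

Lemma mem_EN n l N (p : Pat n l * Mon n l) : (p \in EN n l N) = inb N p.2.
Proof.
case: p => s m /=; apply/allpairsPdep/idP.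
  move=> [s' [al [_ hal [_ ->]]]]; rewrite -mem_mk; apply/mapP; by exists al.
rewrite -mem_mk => /mapP [al hal ->]; exists s, al; split => //.
Qed.

Lemma uniq_EN n l N : uniq (EN n l N).
Proof.
apply: allpairs_uniq; rewrite ?index_enum_uniq //.
by move=> [a b] [c d] _ _ /= [-> /mk_inj ->].
Qed.

Definition hf n l (j : 'I_l) (i : 'I_n) (p : Pat n l * Mon n l) : Pat n l * Mon n l :=
  (updP p.1 j (Some i), updM p.2 j (p.2 j - U_(i))%MM).
Definition hinv n l (j : 'I_l) (i : 'I_n) (p : Pat n l * Mon n l) : Pat n l * Mon n l :=
  (updP p.1 j None, updM p.2 j (p.2 j + U_(i))%MM).

Lemma hfK n l j i (p : Pat n l * Mon n l) :
  p.1 j = None -> (U_(i) <= p.2 j)%MM -> hinv j i (hf j i p) = p.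
Proof.
case: p => s m /= hs hu; rewrite /hinv /hf /updP /updM /=; congr (_, _); apply/ffunP => k; rewrite !ffunE;
  by case: eqP => [->|] //; rewrite ?hs ?eqxx ?submK.
Qed.

Lemma hinvK n l j i (p : Pat n l * Mon n l) :
  p.1 j = Some i -> hf j i (hinv j i p) = p.
Proof.
case: p => s m /= hs; rewrite /hinv /hf /updP /updM /=; congr (_, _); apply/ffunP => k; rewrite !ffunE;
  by case: eqP => [->|] //; rewrite ?hs ?eqxx ?addmK.
Qed.

Definition LLf n l (c : Bhat n l) xs j i (p : Pat n l * Mon n l) : A n :=
  if p.1 j == Some i then ksign p.1 j *: LT c xs j i p.1 p.2 else 0.

Lemma stepE n l (c : Bhat n l) (xs : {ffun 'I_l -> A n}) j i N : (bound xs < N)%N ->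
  \sum_(p <- EN n l N) LLf c xs j i p
  = \sum_(p <- EN n l N) (if (p.1 j == None) && (U_(i) <= p.2 j)%MM
                          then ksign p.1 j *: RT c xs j i p.1 p.2 else 0).
Proof.
move=> bN.
rewrite -[RHS]big_mkcond -[RHS]big_filter.
rewrite [RHS](eq_big_seq (fun p => LLf c xs j i (hf j i p))); last first.
  move=> [s m]; rewrite mem_filter /= => /andP [/andP [/eqP hs hu] _].
  by rewrite RT_LT // /LLf /= ffunE eqxx eqxx.
have -> : \sum_(p <- [seq p : Pat n l * Mon n l <- EN n l N | (p.1 j == None) && (U_(i) <= p.2 j)%MM])
            LLf c xs j i (hf j i p)
        = \sum_(p <- map (hf j i) [seq p : Pat n l * Mon n l <- EN n l N | (p.1 j == None) && (U_(i) <= p.2 j)%MM])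
            LLf c xs j i p by rewrite big_map.
apply: big_seq_eq.
- exact: uniq_EN.
- rewrite map_inj_in_uniq ?filter_uniq ?uniq_EN //.
  move=> p q; rewrite !mem_filter => /andP [/andP [/eqP hp hpu] _] /andP [/andP [/eqP hq hqu] _] e.
  by rewrite -(hfK hp hpu) -(hfK hq hqu) e.
- move=> [s m] hin hnot; rewrite /LLf /=; case: eqP => // hs.
  have hQ : ~~ inb N (updM m j (m j + U_(i))%MM).
    apply/negP => hb; move/negP: hnot; apply; apply/mapP; exists (hinv j i (s, m)).
      by rewrite mem_filter /= mem_EN /= hb !ffunE !eqxx /= andbT lem_addl.
    by rewrite hinvK.
  rewrite mem_EN /= in hin.
  move: hQ; rewrite negb_forall => /existsP [k]; rewrite ffunE.
  case: (eqVneq k j) => [ekj|ne]; rewrite -leqNgt => hk; last first.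
    by have := forallP hin k; rewrite ltnNge hk.
  rewrite /LT -mderivmU1m -mderivmDm addmC mderivm_small ?mul0r ?mulAP0r ?scaler0 //.
  exact: leq_trans (msize_bound xs j None) (leq_trans (ltnW bN) hk).
- move=> x /mapP [[s m]]; rewrite mem_filter /= => /andP [/andP [hs hu] hin] ->.
  rewrite mem_EN /= => /negP []; rewrite mem_EN /= in hin.
  apply/forallP => k; rewrite ffunE; case: eqP => _; last exact: (forallP hin).
  exact: leq_ltn_trans (mdegB _ _) (forallP hin j).
Qed.

Definition RRf n l (c : Bhat n l) xs j i (p : Pat n l * Mon n l) : A n :=
  if (p.1 j == None) && (U_(i) <= p.2 j)%MM then ksign p.1 j *: RT c xs j i p.1 p.2 else 0.

Lemma swap3 (V : nmodType) (I J K : finType) (F : I -> J -> K -> V) :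
  \sum_(a : I) \sum_(b : J) \sum_(k : K) F a b k = \sum_(k : K) \sum_(a : I) \sum_(b : J) F a b k.
Proof.
rewrite (eq_bigr (fun a => \sum_(k : K) \sum_(b : J) F a b k)); last first.
  by move=> a _; rewrite exchange_big.
by rewrite exchange_big.
Qed.

Lemma Sigma_chain n l (c : Bhat n l) xs : d_l (Sigma c) xs = Sigma (partial_l c) xs.
Proof.
pose N := maxn (bound xs).+1 (\max_(j < l) bound (ys xs j)).
have bN : (bound xs < N)%N by rewrite leq_maxl.
have bY j : (bound (ys xs j) <= N)%N.
  by apply: leq_trans _ (leq_maxr _ _); rewrite (bigD1 j) //= leq_maxl.
have -> : d_l (Sigma c) xs = \sum_(j < l) SigmaN N c (ys xs j).
  by apply: eq_bigr => j _; exact: (SigmaNE c (bY j)).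
rewrite (SigmaNE _ (ltnW bN)) /SigmaN.
have -> : \sum_(s : Pat n l) \sum_(al : {ffun 'I_l -> 'X_{1..n < N}})
             term (partial_l c) xs s (mk al)
        = \sum_(j < l) \sum_(i < n) \sum_(s : Pat n l) \sum_(al : {ffun 'I_l -> 'X_{1..n < N}})
             RRf c xs j i (s, mk al).
  rewrite (eq_bigr (fun s => \sum_(al : {ffun 'I_l -> 'X_{1..n < N}}) \sum_(j < l) \sum_(i < n)
             RRf c xs j i (s, mk al))); last first.
    by move=> s _; apply: eq_bigr => al _; rewrite term_partial.
  rewrite swap3; apply: eq_bigr => j _; exact: swap3.
apply: eq_bigr => j _.
rewrite (eq_bigr (fun s => \sum_(al : {ffun 'I_l -> 'X_{1..n < N}}) \sum_(i < n)
             LLf c xs j i (s, mk al))); last first.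
  by move=> s _; apply: eq_bigr => al _; rewrite term_ys.
rewrite swap3; apply: eq_bigr => i _.
rewrite (@sum_EN _ n l N (fun p => LLf c xs j i p)) (@sum_EN _ n l N (fun p => RRf c xs j i p)).
exact: stepE.
Qed.

Unset Implicit Arguments.

Theorem proposition3 (n l : nat) (theta theta' : 'M[R]_n) :
  theta^T = - theta -> theta'^T = - theta' -> (1 <= l)%N ->
  (* Sigma on elementary tensors is the paper's formula *)
      (forall (a : A n) (phis : 'I_l -> Bel n) (xs : {ffun 'I_l -> A n}),
         Sigma (elemB a phis) xs = mulAP a (\prod_(j < l) sigma (phis j) (xs j))) /\
      (* Sigma lands in C^l *)
      (forall c : Bhat n l, multilinear (Sigma c)) /\
      (* Sigma is linear *)
      (forall (k : R) (c c' : Bhat n l) (xs : {ffun 'I_l -> A n}),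
         Sigma (fun s al => k *: c s al + c' s al) xs
         = k *: Sigma c xs + Sigma c' xs) /\
      (* injective *)
      (forall c c' : Bhat n l, (forall xs, Sigma c xs = Sigma c' xs) ->
         forall s al, c s al = c' s al) /\
      (* surjective onto C^l *)
      (forall f : Cl n l, multilinear f ->
         exists c : Bhat n l, forall xs, Sigma c xs = f xs) /\
      (* chain map: d_l Sigma = Sigma partial_l *)
      (forall (c : Bhat n l) xs, d_l (Sigma c) xs = Sigma (partial_l c) xs).
Proof.
move=> _ _ _.
split; first exact: Sigma_elem.
split; first exact: Sigma_ml.
split; first exact: Sigma_lin.
split; first exact: Sigma_inj.
split; first exact: Sigma_surj.
exact: Sigma_chain.
Qed.
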